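(* The prescription assigning (a) an object $G_C[l]=\{(H,\varrho)\mid H\in G[l],\varrho\in C(H)\}$ of $\Sigma$ for every $l\in\mathbb{N}$ and (b) a morphism $G_Cf:G_C[l]\to G_C[m]$ given by $G_Cf(H,\varrho)=(Gf(H),f_{H*}(\varrho))$ for every $l,m\in\mathbb{N}$ and $f\in\mathrm{Hom}_\Omega([l],[m])$ defines a functor $G_C:\Omega\rightarrow\Sigma$ injective on objects and morphisms. Therefore, there exists an $\Omega$ category $G_C\Omega$ having the functor $G_C$ with the target category restricted from $\Sigma$ to $G_C\Omega$ as its stalk isofunctor. Furthermore, $G_C\Omega$ is a non monoidal subcategory of $\Sigma$.
   Context: $\Sigma$ is the category of finite sets and functions; $\Omega$ the category of finite ordinals $[l]=\{0,\dots,l-1\}$ and all functions, strict monoidal with $[l]\smile[m]=[l+m]$, $f\smile g(i)=f(i)$ for $i\in[l]$, $g(i-l)+p$ for $i\in[m]+l$, unit $[0]$. $G=P\circ P_+|_\Omega$, where $P$, $P_+$ are the power set and non empty power set endofunctors of $\Sigma$; so $G[l]$ is the set of hypergraphs on $[l]$ (sets of non empty subsets, called hyperedges) and $Gf(H)=\{f(X)\mid X\in H\}$. Fix finite additive commutative monoids $\mathsf{A}$, $\mathsf{M}$. For finite $X\subset\mathbb{N}$, $\mathsf{A}^X$ is the monoid of functions $X\to\mathsf{A}$; for $f:X\to Y$, $f_\star:\mathsf{A}^X\to\mathsf{A}^Y$, $f_\star(w)(s)=\sum_{r\in X,f(r)=s}w(r)$. A calibration of $X$ is an element of $\mathsf{M}^{\mathsf{A}^X}$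 (functions $\mathsf{A}^X\to\mathsf{M}$), with push-forward $f_*(\varpi)(v)=\sum_{w\in\mathsf{A}^X,f_\star(w)=v}\varpi(w)$. A calibration $\varrho$ of a hypergraph $H\in G[l]$ assigns to each $X\in H$ a calibration $\varrho_X\in\mathsf{M}^{\mathsf{A}^X}$; $C(H)$ is the set of these. For $f\in\mathrm{Hom}_\Omega([l],[m])$, $f_{H*}:C(H)\to C(Gf(H))$ is $f_{H*}(\varrho)_Y=\sum_{X\in H,f(X)=Y}f|_{X*}(\varrho_X)$. An $\Omega$ category is a Pro category $D\Omega$ with a strict monoidal isofunctor (stalk isofunctor) $D:\Omega\to D\Omega$; for $D$ injective on objects and morphisms, $D\Omega$ has objects $D[l]$, morphisms $Df$, composition $D(g\circ f)$, identities $D\,\mathrm{id}_{[l]}$, monoidal products $D([l]\smile[m])$, $D(f\smile g)$ and unit $D[0]$. *)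

(* Defs.v *)
From HB Require Import structures.
From mathcomp Require Import all_boot all_order all_algebra.
Set Implicit Arguments.
Unset Strict Implicit.
Unset Printing Implicit Defensive.
Import GRing.Theory.
Local Open Scope ring_scope.

Section GC.
Variables (A M : finNmodType).

Definition subX (l : nat) (X : {set 'I_l}) := {i : 'I_l | i \in X}.

Definition wts (l : nat) (X : {set 'I_l}) := {ffun subX X -> A}.

Definition calib (l : nat) (X : {set 'I_l}) := {ffun wts X -> M}.

(* f_star for f restricted to X, with target Y (used when Y = f(X)) :
   f_star(w)(s) = sum_{r in X, f r = s} w r *)
Definition fstar (l m : nat) (f : 'I_l -> 'I_m) (X : {set 'I_l})
  (Y : {set 'I_m}) (w : wts X) : subX Y -> A :=
  fun s => \sum_(r : subX X | f (val r) == val s) w r.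
Arguments fstar {l m} f X Y w s.

Definition push (l m : nat) (f : 'I_l -> 'I_m) (X : {set 'I_l})
  (Y : {set 'I_m}) (varpi : calib X) : calib Y :=
  [ffun v : wts Y =>
     \sum_(w : wts X | [forall s : subX Y, fstar f X Y w s == v s]) varpi w].
Arguments push {l m} f X Y varpi.

(* A calibration of a hypergraph H is encoded as a family indexed by all
   subsets X of [l], vanishing (= the zero calibration) outside H. *)
Definition calibs (l : nat) := {dffun forall X : {set 'I_l}, calib X}.

Definition is_GC (l : nat) (p : {set {set 'I_l}} * calibs l) : bool :=
  (set0 \notin p.1) && [forall X, (X \notin p.1) ==> (p.2 X == [ffun=> 0])].

Definition GC (l : nat) : finType := {p : {set {set 'I_l}} * calibs l | is_GC p}.

Definition Gmap (l m : nat) (f : 'I_l -> 'I_m) (H : {set {set 'I_l}}) :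
  {set {set 'I_m}} := [set f @: (X : {set _}) | X : {set 'I_l} in H].

Definition pushH (l m : nat) (f : 'I_l -> 'I_m) (H : {set {set 'I_l}})
  (rho : calibs l) : calibs m :=
  [ffun Y : {set 'I_m} =>
     [ffun v : wts Y => \sum_(X in H | f @: X == Y) push f X Y (rho X) v]].

Lemma GCmap_proof (l m : nat) (f : 'I_l -> 'I_m) (p : GC l) :
  is_GC (Gmap f (val p).1, pushH f (val p).1 (val p).2).
Proof.
case: p => [[H rho]] /= /andP [H0 Hz].
apply/andP; split=> /=.
  apply/imsetP => -[X XH] /esym /eqP.
  rewrite imset_eq0 => /eqP X0; by move: H0; rewrite -X0 XH.
apply/forallP => Y; apply/implyP => YH.
apply/eqP/ffunP => v; rewrite !ffunE.
rewrite big1 // => X /andP [XH /eqP fX].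
case/negP: YH; apply/imsetP; by exists X.
Qed.

Definition GCmap (l m : nat) (f : 'I_l -> 'I_m) (p : GC l) : GC m :=
  exist (fun q => is_GC q) _ (GCmap_proof f p).

End GC.

(* Main.v *)
Require Import Defs.
From mathcomp Require Import all_boot all_order all_algebra.
From Stdlib Require Import FunctionalExtensionality.
Set Implicit Arguments. Unset Strict Implicit. Unset Printing Implicit Defensive.
Import GRing.Theory.

Section Helpers.
Local Open Scope ring_scope.
Variables (A M : finNmodType).

Lemma fstar_id l (X : {set 'I_l}) (w : wts A X) s : @fstar A l l (fun i => i) X X w s = w s.
Proof.
rewrite /fstar (big_pred1 s) // => r /=; exact: val_eqE.
Qed.

Lemma push_id l (X : {set 'I_l}) (c : calib A M X) : push (fun i => i) X c = c.
Proof.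
apply/ffunP => v; rewrite ffunE (big_pred1 v) // => w /=.
apply/forallP/eqP => [h|->]; last by move=> s; rewrite fstar_id.
apply/ffunP => s; rewrite -fstar_id; exact/eqP.
Qed.

Lemma GCmap_id l (p : GC A M l) : GCmap (fun i : 'I_l => i) p = p.
Proof.
apply: val_inj; case: p => [[H rho]] /= /andP [H0 /forallP Hz].
congr pair.
  rewrite /Gmap; apply/setP => X; apply/imsetP/idP => [[Y YH ->]|XH]; last by exists X; rewrite ?imset_id.
  by rewrite imset_id.
apply/ffunP => Y; apply/ffunP => v; rewrite !ffunE.
case: (boolP (Y \in H)) => YH.
  rewrite (big_pred1 Y) ?push_id // => X /=.
  rewrite imset_id; apply/andP/eqP => [[_ /eqP]|->] //.
rewrite big_pred0; first by have /implyP /(_ YH) /eqP -> := Hz Y; rewrite ffunE.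
move=> X /=; rewrite imset_id; apply/negbTE/andP => -[XH /eqP XY].
by move: YH; rewrite -XY XH.
Qed.


Section Comp.
Variables (l m n : nat) (f : 'I_l -> 'I_m) (g : 'I_m -> 'I_n).
Variables (X : {set 'I_l}) (Y : {set 'I_m}) (Z : {set 'I_n}).
Hypothesis hY : f @: X \subset Y.

Definition pr (r : subX X) : subX Y :=
  exist _ (f (val r)) (subsetP hY _ (imset_f f (valP r))).

Lemma fstar_comp (w : wts A X) (s : subX Z) :
  @fstar A m n g Y Z ([ffun t => @fstar A l m f X Y w t] : wts A Y) s = @fstar A l n (g \o f) X Z w s.
Proof.
rewrite /fstar (partition_big pr (fun t : subX Y => g (val t) == val s)) //.
apply: eq_bigr => t /eqP gt; rewrite ffunE; apply: eq_bigl => r /=.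
rewrite -[pr r == t]val_eqE /=; apply/idP/andP => [/eqP e|[_ //]]; by rewrite e gt.
Qed.

Lemma push_comp (c : calib A M X) : push g Z (push f Y c) = push (g \o f) Z c.
Proof.
apply/ffunP => v; rewrite !ffunE.
pose p (w : wts A X) : wts A Y := [ffun t => @fstar A l m f X Y w t].
rewrite (partition_big p (fun w' : wts A Y => [forall s, @fstar A m n g Y Z w' s == v s])); last first.
  by move=> w /forallP h; apply/forallP => s; rewrite fstar_comp h.
apply: eq_bigr => w' /forallP Q; rewrite ffunE; apply: eq_bigl => w /=.
have E : (p w == w') = [forall t, @fstar A l m f X Y w t == w' t].
  apply/eqP/forallP => [e t|h]; first by rewrite -e /p ffunE.
  by apply/ffunP => t; rewrite /p ffunE; apply/eqP.
rewrite E; case: (boolP [forall t, @fstar A l m f X Y w t == w' t]) => /= h; last by rewrite andbF.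
move/forallP: h => h; rewrite andbT; symmetry.
have e : p w = w' by apply/ffunP => t; rewrite /p ffunE; apply/eqP.
by apply/forallP => s; rewrite -fstar_comp -/(p w) e; exact: Q.
Qed.
End Comp.


Lemma push_sum (l n : nat) (g : 'I_l -> 'I_n) (Y : {set 'I_l}) (Z : {set 'I_n})
  (I : finType) (P : pred I) (F : I -> calib A M Y) v :
  push g Z [ffun w' => \sum_(i | P i) F i w'] v = \sum_(i | P i) push g Z (F i) v.
Proof.
rewrite ffunE; under eq_bigr do rewrite ffunE.
rewrite exchange_big; apply: eq_bigr => i _; by rewrite ffunE.
Qed.

Lemma GCmap_comp (l m n : nat) (f : 'I_l -> 'I_m) (g : 'I_m -> 'I_n) (p : GC A M l) :
  GCmap (g \o f) p = GCmap g (GCmap f p).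
Proof.
apply: val_inj; case: p => [[H rho]] hp /=; congr pair.
  by rewrite /Gmap -imset_comp; apply: eq_imset => X /=; exact: imset_comp.
apply/ffunP => Z; apply/ffunP => v; rewrite !ffunE.
transitivity (\sum_(Y in Gmap f H | g @: Y == Z)
   \sum_(X in H | f @: X == Y) push (g \o f) Z (rho X) v); last first.
  apply: eq_bigr => Y _; rewrite [pushH f H rho Y]ffunE push_sum; apply: eq_bigr => X /andP [_ /eqP fXY].
  subst Y; by rewrite push_comp.
rewrite (partition_big (fun X : {set 'I_l} => f @: X) (fun Y : {set 'I_m} => (Y \in Gmap f H) && (g @: Y == Z))); last first.
  move=> X /andP [XH gfX]; apply/andP; split; first exact: imset_f.
  by rewrite -imset_comp.
apply: eq_bigr => Y /andP [_ /eqP gY]; apply: eq_bigl => X /=.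
case: (boolP (X \in H)) => //= XH; case: (f @: X =P Y) => [fX|_]; last by rewrite andbF.
by rewrite andbT imset_comp fX gY eqxx.
Qed.


Lemma set0_1 (T : finType) (x : T) : (set0 == [set x]) = false.
Proof. by apply/eqP => /setP /(_ x); rewrite !inE eqxx. Qed.

Definition zc l : calibs A M l := @finfun _ (fun X => calib A M X) (fun X => [ffun=> 0]).
Lemma mkGC_proof l (H : {set {set 'I_l}}) (h : set0 \notin H) : is_GC (H, zc l).
Proof. by rewrite /is_GC h /=; apply/forallP => X; apply/implyP => _; rewrite ffunE. Qed.
Definition mkGC l H h : GC A M l := exist _ (H, zc l) (@mkGC_proof l H h).

Lemma zeroOut l (p : GC A M l) X : X \notin (val p).1 -> (val p).2 X = [ffun=> 0].
Proof. case: p => [[H rho]] /= /andP [_ /forallP Hz] XH; exact/eqP/(implyP (Hz X)). Qed.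

Lemma set0_notin l (p : GC A M l) : set0 \notin (val p).1.
Proof. by case: p => [[H rho]] /= /andP []. Qed.

Lemma GCmap_injf l m (f g : 'I_l -> 'I_m) : GCmap (A:=A) (M:=M) f =1 GCmap g -> f =1 g.
Proof.
move=> e i.
have h : set0 \notin [set [set i]] by rewrite in_set1 set0_1.
have := congr1 (fun p => (val p).1) (e (mkGC h)).
by rewrite /= /Gmap !imset_set1 => /set1_inj /set1_inj.
Qed.

Lemma GC0_sub (p q : GC A M 0) : p = q.
Proof.
have X0 (X : {set 'I_0}) : X = set0 by apply/setP => -[].
have E (r : GC A M 0) : val r = (set0, zc 0).
  case: r => [[H rho] hr] /=; have H0 : H = set0.
    apply/setP => X; rewrite (X0 X) in_set0; apply/negbTE.
    exact: (set0_notin (exist _ (H, rho) hr)).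
  subst H; congr pair; apply/ffunP => X; rewrite ffunE.
  by apply: (zeroOut (p := exist _ (set0, rho) hr)); rewrite in_set0.
by apply: val_inj; rewrite !E.
Qed.

Lemma GCmap_inj l : injective (GCmap (A:=A) (M:=M) (widen_ord (leqnSn l))).
Proof.
case: l => [|k] p q e; first exact: GC0_sub.
pose r : 'I_k.+2 -> 'I_k.+1 := fun i => inord i.
have rw : r \o widen_ord (leqnSn k.+1) = (fun i => i).
  by apply: functional_extensionality => i; rewrite /= /r inord_val.
by rewrite -[p]GCmap_id -[q]GCmap_id -rw !GCmap_comp e.
Qed.

Lemma card_lt l : (#|GC A M l| < #|GC A M l.+1|)%N.
Proof.
have hW : set0 \notin [set [set (@ord_max l)]] by rewrite in_set1 set0_1.
pose W := mkGC hW.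
have notW p : GCmap (widen_ord (leqnSn l)) p <> W.
  move/(congr1 (fun p => (val p).1)) => /= e.
  have : [set ord_max] \in Gmap (widen_ord (leqnSn l)) (val p).1 by rewrite e set11.
  case/imsetP => X XH /setP /(_ ord_max); rewrite in_set1 eqxx => /esym /imsetP [x _].
  move/(congr1 val) => /= h; have := ltn_ord x; by rewrite -h ltnn.
pose F (o : option (GC A M l)) : GC A M l.+1 :=
  if o is Some p then GCmap (widen_ord (leqnSn l)) p else W.
have Finj : injective F.
  case=> [p|] [q|] //= e; first by rewrite (GCmap_inj e).
    by case: (notW p).
  by case: (notW q).
by have := leq_card F Finj; rewrite card_option.
Qed.

Lemma card_ltm l m : (l < m -> #|GC A M l| < #|GC A M m|)%N.
Proof.
elim: m => // m IH; rewrite ltnS leq_eqVlt => /orP [/eqP ->|h]; first exact: card_lt.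
exact: ltn_trans (IH h) (card_lt m).
Qed.

Lemma GC_inj l m : GC A M l = GC A M m -> l = m.
Proof.
move=> E; have C : #|GC A M l| = #|GC A M m| by rewrite E.
case: (ltngtP l m) => // h.
  by have := card_ltm h; rewrite C ltnn.
by have := card_ltm h; rewrite C ltnn.
Qed.


Lemma card_calib l (X : {set 'I_l}) : #|calib A M X| = (#|M| ^ (#|A| ^ #|X|))%N.
Proof.
rewrite /calib card_ffun /wts card_ffun /subX card_sig.
by congr (_ ^ (_ ^ _))%N; apply: eq_card => i.
Qed.

Lemma N1 : (#|GC A M 1| <= (#|M| ^ #|A|).+1)%N.
Proof.
pose X1 : {set 'I_1} := [set ord0].
have sets1 (X : {set 'I_1}) : X = set0 \/ X = X1.
  case: (boolP (ord0 \in X)) => h; [right|left]; apply/setP => i;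
    rewrite (ord1 i) !inE ?h ?eqxx //; exact/negbTE.
pose F (p : GC A M 1) : option (calib A M X1) :=
  if X1 \in (val p).1 then Some ((val p).2 X1) else None.
have Finj : injective F.
  move=> p q; rewrite /F.
  have p0 := set0_notin p; have q0 := set0_notin q.
  have Hpq : X1 \in (val p).1 = (X1 \in (val q).1) -> (val p).1 = (val q).1.
    move=> e; apply/setP => X; case: (sets1 X) => ->; last exact: e.
    by rewrite (negbTE p0) (negbTE q0).
  case hp: (X1 \in (val p).1); case hq: (X1 \in (val q).1) => // e; apply: val_inj;
    rewrite (surjective_pairing (val p)) (surjective_pairing (val q)) Hpq ?hp ?hq //;
    congr pair; apply/ffunP => X; (case: (sets1 X) => ->; first by rewrite !zeroOut).
  by case: e.
by rewrite !zeroOut ?hp ?hq.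
have := leq_card F Finj; by rewrite card_option card_calib cards1 expn1.
Qed.

Lemma N2 : (2 * ((#|M| ^ #|A|).+1 * (#|M| ^ #|A|).+1) <= #|GC A M 2|)%N.
Proof.
pose X0 : {set 'I_2} := [set ord0].
pose X1 : {set 'I_2} := [set ord_max].
pose XT : {set 'I_2} := [set: 'I_2].
have d01 : (X0 == X1) = false by apply/eqP => /setP /(_ ord0); rewrite !inE.
have d0T : (X0 == XT) = false by apply/eqP => /setP /(_ ord_max); rewrite !inE.
have d1T : (X1 == XT) = false by apply/eqP => /setP /(_ ord0); rewrite !inE.
pose T := (option (calib A M X0) * option (calib A M X1) * bool)%type.
pose HH (t : T) : {set {set 'I_2}} :=
  [set X | ((X == X0) && isSome t.1.1) || ((X == X1) && isSome t.1.2) || ((X == XT) && t.2)].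
pose RR (t : T) : calibs A M 2 := @finfun _ (fun Y => calib A M Y) (fun Y =>
  if Y == X0 then (if t.1.1 is Some c then push (fun i => i) Y c else [ffun=> 0])
  else if Y == X1 then (if t.1.2 is Some c then push (fun i => i) Y c else [ffun=> 0])
  else [ffun=> 0]).
have hG (t : T) : is_GC (HH t, RR t).
  apply/andP; split.
    rewrite inE /X0 /X1 /XT !set0_1.
    case: eqP => //= /setP /(_ ord0); by rewrite !inE.
  apply/forallP => X; apply/implyP; rewrite inE /= ffunE.
  case: (X =P X0) => [->|_]; first by case: t.1.1.
  case: (X =P X1) => [->|_] //=; by case: t.1.2.
pose F (t : T) : GC A M 2 := exist _ (HH t, RR t) (hG t).
pose G (p : GC A M 2) : T :=
  (if X0 \in (val p).1 then Some ((val p).2 X0) else None,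
   if X1 \in (val p).1 then Some ((val p).2 X1) else None,
   XT \in (val p).1).
have FG : cancel F G.
  move=> [[o0 o1] b]; rewrite /G /F /= /HH !inE eqxx d01 d0T eq_sym d01 d1T eq_sym d0T eq_sym d1T /=.
  rewrite !eqxx /= !orbF.
  case: o0 => [c|]; case: o1 => [c'|] //=; rewrite !ffunE ?eqxx ?(eq_sym X1) ?d01 ?eqxx /= ?push_id //.
have := leq_card F (can_inj FG).
by rewrite !card_prod !card_option card_bool !card_calib !cards1 !expn1 mulnC.
Qed.

End Helpers.

Theorem proposition3p20 (A M : finNmodType) :
  (* G_C is a functor Omega -> Sigma: identities ... *)
  (forall (l : nat) (p : GC A M l), GCmap (fun i : 'I_l => i) p = p) /\
  (* ... and composition *)
  (forall (l m n : nat) (f : 'I_l -> 'I_m) (g : 'I_m -> 'I_n) (p : GC A M l),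
      GCmap (g \o f) p = GCmap g (GCmap f p)) /\
  (* G_C is injective on objects *)
  (forall l m : nat, GC A M l = GC A M m -> l = m) /\
  (* G_C is injective on morphisms *)
  (forall (l m : nat) (f g : 'I_l -> 'I_m),
      @GCmap A M l m f =1 @GCmap A M l m g -> f =1 g) /\
  (* G_C Omega is a non monoidal subcategory of Sigma: its monoidal product
     G_C[l] (x) G_C[m] := G_C[l+m] is neither the cartesian product nor the
     disjoint union of Sigma (not even up to bijection) *)
  (exists l m : nat,
      #|GC A M (l + m)| <> (#|GC A M l| * #|GC A M m|)%N /\
      #|GC A M (l + m)| <> (#|GC A M l| + #|GC A M m|)%N).
Proof.
split; first exact: GCmap_id.
split; first exact: GCmap_comp.
split; first exact: GC_inj.
split; first exact: GCmap_injf.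
exists 1%N, 1%N.
have h1 := N1 A M; have h2 := N2 A M.
set a := (#|M| ^ #|A|)%N in h1 h2.
have a0 : (0 < a)%N by rewrite expn_gt0; apply/orP; left; apply/card_gt0P; exists 0%R.
set N := #|GC A M 1| in h1 *; set N' := #|GC A M (1 + 1)|.
have hN' : (2 * (a.+1 * a.+1) <= N')%N by [].
have hNN : (N * N <= a.+1 * a.+1)%N by apply: leq_mul.
have hNa : (N <= a.+1)%N by [].
split=> E; rewrite -/N' E in hN'.
  have := leq_trans hN' hNN; rewrite -[X in (_ <= X)%N]mul1n leq_mul2r /=; by [].
have := leq_trans hN' (leq_add hNa hNa); rewrite addnn -mul2n leq_mul2l /=.
rewrite -{3}[a.+1]muln1 leq_pmul2l // ltnS leqn0 => /eqP a00; by rewrite a00 in a0.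
Qed.
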